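(* Let $\mathcal{M}_A$ denote the set of multiway-growth-approximable functions. For every polynomial $p$ with $p\in\mathcal{M}_A$, the set $\mathcal{M}_A$ contains a function asymptotically equal (in the sense of $\Theta$) to $x\mapsto\ln(x)\cdot p(x)$.
   Context: A (string-based) multiway system is a triple $(R,s_{\text{init}},\Sigma)$ with $\Sigma$ a finite alphabet, $R$ a finite set of string replacement rules over $\Sigma$, and $s_{\text{init}}\in\Sigma^*$. Its states graph has as vertices the strings reachable from $s_{\text{init}}$, with an edge $u\to v$ if $v$ arises from $u$ by replacing one occurrence of a rule's left side by its right side. The growth function $g_M(n)$ is the number of states at shortest-path distance $n-1$ from $s_{\text{init}}$. For $h:\mathbb{N}_+\to\mathbb{N}$, $L_{\mathbb{N}}(h):\mathbb{R}_{\ge0}\to\mathbb{R}_{\ge0}$ is the polygonal chain from $(0,0)$ through the points $(n,h(n))$. A function $f:\mathbb{R}_{\ge0}\to\mathbb{R}_{\ge0}$ is multiway-growth-approximable if there is a multiway system $M$ with $f\in\Theta(L_{\mathbb{N}}(g_M))$. *)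

(* Defs.v *)
From Stdlib Require Import Reals Lra Lia ZArith List.
Import ListNotations.
Open Scope R_scope.

Definition word := list nat.

Definition word_over (k : nat) (w : word) : Prop :=
  forall a, In a w -> (a < k)%nat.

Record multiway := MkMultiway {
  mw_k : nat;
  mw_rules : list (word * word);
  mw_init : word
}.

Definition mw_wf (M : multiway) : Prop :=
  word_over (mw_k M) (mw_init M) /\
  forall l r, In (l, r) (mw_rules M) ->
    word_over (mw_k M) l /\ word_over (mw_k M) r.

Definition mw_step (M : multiway) (u v : word) : Prop :=
  exists l r x y, In (l, r) (mw_rules M) /\
    u = x ++ l ++ y /\ v = x ++ r ++ y.

Fixpoint reach_in (M : multiway) (n : nat) (v : word) : Prop :=
  match n with
  | O => v = mw_init M
  | S m => exists u, reach_in M m u /\ mw_step M u v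
  end.

Definition at_dist (M : multiway) (n : nat) (v : word) : Prop :=
  reach_in M n v /\ forall m, (m < n)%nat -> ~ reach_in M m v.

(* g is the growth function of M: for n >= 1, g n = number of states at
   distance n-1 (the value g 0 is irrelevant). *)
Definition is_growth (M : multiway) (g : nat -> nat) : Prop :=
  forall n, (1 <= n)%nat ->
    exists s : list word, NoDup s /\
      (forall v, In v s <-> at_dist M (n - 1) v) /\ length s = g n.

(* polygonal chain L_N(h) through (0,0) and (n, h n) for n >= 1 *)
Definition hz (h : nat -> nat) (n : nat) : R :=
  match n with O => 0 | _ => INR (h n) end.

Definition polychain (h : nat -> nat) (x : R) : R :=
  let n := Z.to_nat (Int_part x) in
  hz h n + (x - INR n) * (hz h (S n) - hz h n).

Definition BigTheta (f g : R -> R) : Prop :=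
  exists c1 c2 x0 : R, 0 < c1 /\ 0 < c2 /\
    forall x, 0 <= x -> x0 <= x -> c1 * g x <= f x /\ f x <= c2 * g x.

Definition multiway_approximable (f : R -> R) : Prop :=
  (forall x, 0 <= x -> 0 <= f x) /\
  exists (M : multiway) (g : nat -> nat),
    mw_wf M /\ is_growth M g /\ BigTheta f (polychain g).

(* real polynomials as coefficient lists (constant term first) *)
Fixpoint peval (p : list R) (x : R) : R :=
  match p with
  | [] => 0
  | a :: q => a + x * peval q x
  end.

(* Main.v *)
Require Import Defs.
From Stdlib Require Import Reals List.
From Stdlib Require Import Lra Lia ZArith Arith ClassicalEpsilon.
Import ListNotations.
Open Scope R_scope.
Open Scope R_scope.

Lemma marker_split (M : nat) : forall (A B P Q : list nat),
  A ++ M :: B = P ++ M :: Q -> ~ In M P -> ~ In M Q -> A = P /\ B = Q.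
Proof.
  induction A as [|a A IH]; intros B P Q H HP HQ.
  - destruct P as [|p P]; simpl in *.
    + inversion H; auto.
    + inversion H; subst. exfalso; apply HP; left; reflexivity.
  - destruct P as [|p P]; simpl in *.
    + inversion H; subst. exfalso; apply HQ; apply in_or_app; right; left; reflexivity.
    + inversion H; subst.
      destruct (IH B P Q H2) as [-> ->]; auto.
Qed.

Lemma prefix_split (c : nat) (l' : list nat) : forall (P A y v : list nat),
  A ++ (c :: l') ++ y = P ++ v -> ~ In c P ->
  exists x', A = P ++ x' /\ v = x' ++ (c :: l') ++ y.
Proof.
  induction P as [|p P IH]; intros A y v H HP.
  - exists A; simpl in *; auto.
  - destruct A as [|a A]; simpl in *.
    + inversion H; subst. exfalso; apply HP; left; reflexivity.
    + inversion H; subst.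
      destruct (IH A y v H2) as [x' [-> ->]]; [intro; apply HP; right; auto|].
      exists x'; auto.
Qed.

Lemma repeat_S_r {A} (c : A) n : repeat c (S n) = repeat c n ++ [c].
Proof. replace (S n) with (n + 1)%nat by lia. rewrite repeat_app. reflexivity. Qed.

Ltac notin :=
  let H := fresh in intro H;
  repeat match goal with
  | H : In _ (_ ++ _) |- _ => apply in_app_or in H; destruct H as [H|H]
  | H : In _ (repeat _ _) |- _ => apply repeat_spec in H
  | H : In _ (_ :: _) |- _ => destruct H as [H|H]
  | H : In _ [] |- _ => destruct H
  end; try lia.

Lemma NoDup_flat_map {A B} (f : A -> list B) : forall l,
  NoDup l -> (forall x, In x l -> NoDup (f x)) ->
  (forall x y b, In x l -> In y l -> In b (f x) -> In b (f y) -> x = y) ->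
  NoDup (flat_map f l).
Proof.
  induction l as [|a l IH]; intros Hl Hf Hd; simpl; [constructor|].
  inversion Hl; subst.
  apply NoDup_app.
  - apply Hf; left; auto.
  - apply IH; auto. intros; apply Hf; right; auto.
    intros; eapply Hd; eauto; right; auto.
  - intros b Hb Hb'. apply in_flat_map in Hb' as [y [Hy Hb']].
    assert (a = y) by (eapply Hd; eauto; [left|right]; auto). subst. contradiction.
Qed.

Lemma flat_map_len_le {A B} (f : A -> list B) (K : nat) : forall l,
  (forall x, In x l -> (length (f x) <= K)%nat) ->
  (length (flat_map f l) <= length l * K)%nat.
Proof.
  induction l as [|a l IH]; intros H; simpl; auto.
  rewrite length_app. specialize (IH (fun x Hx => H x (or_intror Hx))).
  specialize (H a (or_introl eq_refl)). lia.
Qed.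

Lemma flat_map_len_ge {A B} (f : A -> list B) (K : nat) : forall l,
  (forall x, In x l -> (K <= length (f x))%nat) ->
  (length l * K <= length (flat_map f l))%nat.
Proof.
  induction l as [|a l IH]; intros H; simpl; auto.
  rewrite length_app. specialize (IH (fun x Hx => H x (or_intror Hx))).
  specialize (H a (or_introl eq_refl)). lia.
Qed.

Fixpoint allw (k L : nat) : list word :=
  match L with
  | O => [[]]
  | S L' => flat_map (fun w => map (fun c => c :: w) (seq 0 k)) (allw k L')
  end.

Lemma allw_In k : forall L w, length w = L -> word_over k w -> In w (allw k L).
Proof.
  induction L; intros w Hl Hw.
  - destruct w; simpl in *; [auto|lia].
  - destruct w as [|c w]; simpl in *; [lia|].
    apply in_flat_map. exists w. split.
    + apply IHL; [lia|]. intros a Ha; apply Hw; right; auto.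
    + apply in_map_iff. exists c; split; auto. apply in_seq. assert (c < k)%nat by (apply Hw; left; auto). lia.
Qed.

Definition graded (M : multiway) : Prop :=
  forall l r, In (l, r) (mw_rules M) -> length r = S (length l).

Lemma reach_len M : graded M -> forall n v, reach_in M n v ->
  length v = (length (mw_init M) + n)%nat.
Proof.
  intros HG; induction n; intros v H; simpl in H.
  - subst; lia.
  - destruct H as [u [Hu [l [r [x [y [Hin [-> ->]]]]]]]].
    apply IHn in Hu. rewrite !length_app in *. apply HG in Hin. lia.
Qed.

Lemma reach_over M : mw_wf M -> forall n v, reach_in M n v -> word_over (mw_k M) v.
Proof.
  intros [Hi Hr]; induction n; intros v H; simpl in H.
  - subst; auto.
  - destruct H as [u [Hu [l [r [x [y [Hin [-> ->]]]]]]]].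
    apply IHn in Hu. destruct (Hr _ _ Hin) as [_ Hr'].
    intros a Ha. apply in_app_or in Ha as [Ha|Ha].
    + apply Hu; apply in_or_app; auto.
    + apply in_app_or in Ha as [Ha|Ha]; [apply Hr'; auto|].
      apply Hu; apply in_or_app; right; apply in_or_app; auto.
Qed.

Lemma at_dist_reach M : graded M -> forall n v, at_dist M n v <-> reach_in M n v.
Proof.
  intros HG n v; split; [intros [H _]; auto|].
  intros H; split; auto. intros m Hm H'.
  apply reach_len in H; auto. apply reach_len in H'; auto. lia.
Qed.

Definition gfun (M : multiway) (n : nat) : nat :=
  length (nodup (list_eq_dec Nat.eq_dec)
    (filter (fun w => if excluded_middle_informative (at_dist M (n - 1) w) then true else false)
       (allw (mw_k M) (length (mw_init M) + (n - 1))))).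

Lemma gfun_growth M : mw_wf M -> graded M -> is_growth M (gfun M).
Proof.
  intros HW HG n Hn.
  eexists; split; [apply NoDup_nodup|split; [|reflexivity]].
  intros v. rewrite nodup_In, filter_In.
  destruct (excluded_middle_informative (at_dist M (n - 1) v)) as [H|H]; split; intros; auto.
  - split; auto. apply allw_In.
    + apply reach_len; auto. apply H.
    + eapply reach_over; eauto. apply H.
  - destruct H0; discriminate.
  - contradiction.
Qed.

Lemma gfun_upper M (U : list word) m : mw_wf M -> graded M ->
  (forall v, reach_in M m v -> In v U) -> (gfun M (S m) <= length U)%nat.
Proof.
  intros HW HG H. unfold gfun. apply NoDup_incl_length; [apply NoDup_nodup|].
  intros v Hv. rewrite nodup_In, filter_In in Hv. destruct Hv as [_ Hv].
  destruct (excluded_middle_informative (at_dist M (S m - 1) v)) as [H'|H']; [|discriminate].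
  apply H. replace m with (S m - 1)%nat by lia. apply H'.
Qed.

Lemma gfun_lower M (K : list word) m : mw_wf M -> graded M -> NoDup K ->
  (forall v, In v K -> reach_in M m v) -> (length K <= gfun M (S m))%nat.
Proof.
  intros HW HG HK H. unfold gfun. apply NoDup_incl_length; auto.
  intros v Hv. rewrite nodup_In, filter_In. replace (S m - 1)%nat with m by lia.
  destruct (excluded_middle_informative (at_dist M m v)) as [H'|H'].
  - split; auto. apply allw_In.
    + apply reach_len; auto.
    + eapply reach_over; eauto.
  - exfalso; apply H'. apply at_dist_reach; auto.
Qed.
Open Scope R_scope.
Open Scope nat_scope.

Definition base_rules : list (word * word) :=
  [ ([3;0], [0;0;3]); ([3;2], [4;2;2]); ([0;4], [4;0;0]);
    ([1;4], [1;1;3]); ([1;4], [1;1;5]); ([5], [5;6]) ].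

Fixpoint T (j : nat) : nat := match j with O => O | S j' => T j' + 3 * 4 ^ j' + 2 end.

Definition PD j i := repeat 1 (S j) ++ repeat 0 (2 * i) ++ 3 :: repeat 0 (4 ^ j - i) ++ repeat 2 (S j).
Definition PU j i := repeat 1 (S j) ++ repeat 0 (2 * 4 ^ j - i) ++ 4 :: repeat 0 (2 * i) ++ repeat 2 (S (S j)).
Definition B j s := repeat 1 (S (S j)) ++ 5 :: repeat 6 s ++ repeat 0 (4 * 4 ^ j) ++ repeat 2 (S (S j)).

Definition M0 := MkMultiway 7 base_rules (PD 0 0).

Definition Inv0 n v :=
  (exists j i, i <= 4 ^ j /\ n = T j + i /\ v = PD j i) \/
  (exists j i, i <= 2 * 4 ^ j /\ n = T j + 4 ^ j + 1 + i /\ v = PU j i) \/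
  (exists j s, n = T (S j) + s /\ v = B j s).

Ltac inapp H := repeat (rewrite <- app_assoc in H; simpl in H).

Ltac absent c := exfalso; match goal with Hv : ?x ++ ?l ++ ?y = _ |- _ =>
  assert (Hc: In c (x ++ l ++ y)) by (apply in_or_app; right; simpl; auto);
  rewrite Hv in Hc; revert Hc; notin end.

Lemma step_inv0 n v w : Inv0 n v -> mw_step M0 v w -> Inv0 (S n) w.
Proof.
  intros HI [l [r [x [y [Hin [Hv Hw]]]]]]. subst w. symmetry in Hv.
  simpl in Hin.
  destruct HI as [[j [i [Hi [Hn HP]]]] | [[j [i [Hi [Hn HP]]]] | [j [s [Hn HP]]]]]; subst v.
  -
    unfold PD in Hv. rewrite (app_assoc (repeat 1 _)) in Hv.
    destruct Hin as [E|[E|[E|[E|[E|[E|[]]]]]]]; inversion E; subst l r; clear E.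
    + replace (x ++ [3;0] ++ y) with ((x ++ []) ++ 3 :: (0 :: y)) in Hv by (rewrite app_nil_r; auto).
      apply marker_split in Hv; [|notin|notin]. destruct Hv as [Hx Hy]. rewrite app_nil_r in Hx. subst x.
      destruct (4 ^ j - i) eqn:Hk; simpl in Hy.
      * destruct j; simpl in Hy; discriminate.
      * inversion Hy; subst y. left. exists j, (S i). split; [lia|split; [lia|]].
        unfold PD. replace (2 * S i) with (2*i+2) by lia. rewrite repeat_app.
        replace (4^j - S i) with n0 by lia. rewrite <- !app_assoc. reflexivity.
    + replace (x ++ [3;2] ++ y) with ((x ++ []) ++ 3 :: (2 :: y)) in Hv by (rewrite app_nil_r; auto).
      apply marker_split in Hv; [|notin|notin]. destruct Hv as [Hx Hy]. rewrite app_nil_r in Hx. subst x.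
      destruct (4 ^ j - i) eqn:Hk; simpl in Hy; [|discriminate].
      inversion Hy; subst. right; left. exists j, 0. split; [lia|split; [lia|]].
      unfold PU. replace i with (4 ^ j) by lia. rewrite Nat.sub_0_r. rewrite <- !app_assoc. reflexivity.
    + exfalso. assert (In 4 (x ++ [0;4] ++ y)) by (apply in_or_app; right; simpl; auto).
      rewrite Hv in H. revert H; notin.
    + exfalso. assert (In 4 (x ++ [1;4] ++ y)) by (apply in_or_app; right; simpl; auto).
      rewrite Hv in H. revert H; notin.
    + exfalso. assert (In 4 (x ++ [1;4] ++ y)) by (apply in_or_app; right; simpl; auto).
      rewrite Hv in H. revert H; notin.
    + exfalso. assert (In 5 (x ++ [5] ++ y)) by (apply in_or_app; right; simpl; auto).
      rewrite Hv in H. revert H; notin.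
  -
    unfold PU in Hv. rewrite (app_assoc (repeat 1 _)) in Hv.
    destruct Hin as [E|[E|[E|[E|[E|[E|[]]]]]]]; inversion E; subst l r; clear E.
    + exfalso. assert (In 3 (x ++ [3;0] ++ y)) by (apply in_or_app; right; simpl; auto).
      rewrite Hv in H. revert H; notin.
    + exfalso. assert (In 3 (x ++ [3;2] ++ y)) by (apply in_or_app; right; simpl; auto).
      rewrite Hv in H. revert H; notin.
    + replace (x ++ [0;4] ++ y) with ((x ++ [0]) ++ 4 :: y) in Hv by (rewrite <- app_assoc; auto).
      apply marker_split in Hv; [|notin|notin]. destruct Hv as [Hx Hy]. subst y.
      destruct (2 * 4 ^ j - i) eqn:Hk.
      * exfalso. rewrite app_nil_r, repeat_S_r in Hx. apply app_inj_tail in Hx. destruct Hx; discriminate.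
      * rewrite (repeat_S_r 0 n0), app_assoc in Hx. apply app_inj_tail in Hx. destruct Hx as [Hx _]. subst x.
        right; left. exists j, (S i). split; [lia|split; [lia|]].
        unfold PU. replace (2 * 4 ^ j - S i) with n0 by lia.
        replace (2 * S i) with (S (S (2 * i))) by lia. rewrite <- !app_assoc. reflexivity.
    + replace (x ++ [1;4] ++ y) with ((x ++ [1]) ++ 4 :: y) in Hv by (rewrite <- app_assoc; auto).
      apply marker_split in Hv; [|notin|notin]. destruct Hv as [Hx Hy]. subst y.
      destruct (2 * 4 ^ j - i) eqn:Hk.
      * rewrite app_nil_r, repeat_S_r in Hx. apply app_inj_tail in Hx. destruct Hx as [Hx _]. subst x.
        left. exists (S j), 0. split; [lia|split].
        { simpl. lia. }
        unfold PD. replace (4 ^ S j - 0) with (2 * i) by (simpl; lia).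
        assert (H1: repeat 1 (S (S j)) = repeat 1 j ++ [1;1]) by (replace (S (S j)) with (j+2) by lia; apply repeat_app).
        rewrite H1, <- app_assoc. reflexivity.
      * exfalso. rewrite (repeat_S_r 0 n0), app_assoc in Hx. apply app_inj_tail in Hx. destruct Hx; discriminate.
    + replace (x ++ [1;4] ++ y) with ((x ++ [1]) ++ 4 :: y) in Hv by (rewrite <- app_assoc; auto).
      apply marker_split in Hv; [|notin|notin]. destruct Hv as [Hx Hy]. subst y.
      destruct (2 * 4 ^ j - i) eqn:Hk.
      * rewrite app_nil_r, repeat_S_r in Hx. apply app_inj_tail in Hx. destruct Hx as [Hx _]. subst x.
        right; right. exists j, 0. split; [simpl; lia|].
        unfold B. replace (4 * 4 ^ j) with (2 * i) by lia.
        assert (H1: repeat 1 (S (S j)) = repeat 1 j ++ [1;1]) by (replace (S (S j)) with (j+2) by lia; apply repeat_app).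
        rewrite H1, <- app_assoc. reflexivity.
      * exfalso. rewrite (repeat_S_r 0 n0), app_assoc in Hx. apply app_inj_tail in Hx. destruct Hx; discriminate.
    + exfalso. assert (In 5 (x ++ [5] ++ y)) by (apply in_or_app; right; simpl; auto).
      rewrite Hv in H. revert H; notin.
  -
    unfold B in Hv.
    destruct Hin as [E|[E|[E|[E|[E|[E|[]]]]]]]; inversion E; subst l r; clear E.
    1,2: absent 3.
    1,2,3: absent 4.
    replace (x ++ [5] ++ y) with (x ++ 5 :: y) in Hv by auto.
    apply marker_split in Hv; [|notin|notin]. destruct Hv as [Hx Hy]. subst x y.
    right; right. exists j, (S s). split; [lia|]. reflexivity.
Qed.

Lemma reach_S M n u v : reach_in M n u -> mw_step M u v -> reach_in M (S n) v.
Proof. intros; simpl; eauto. Qed.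

Lemma mk_step l r x y u v : In (l, r) base_rules -> u = x ++ l ++ y -> v = x ++ r ++ y -> mw_step M0 u v.
Proof. intros; exists l, r, x, y; auto. Qed.

Lemma chainPD j : reach_in M0 (T j) (PD j 0) -> forall i, i <= 4 ^ j -> reach_in M0 (T j + i) (PD j i).
Proof.
  intros H0; induction i; intros Hi; [rewrite Nat.add_0_r; auto|].
  replace (T j + S i) with (S (T j + i)) by lia. eapply reach_S; [apply IHi; lia|].
  apply (mk_step [3;0] [0;0;3] (repeat 1 (S j) ++ repeat 0 (2 * i)) (repeat 0 (4 ^ j - S i) ++ repeat 2 (S j))).
  - simpl; tauto.
  - unfold PD. replace (4 ^ j - i) with (S (4 ^ j - S i)) by lia. rewrite <- !app_assoc. reflexivity.
  - unfold PD. replace (2 * S i) with (2*i+2) by lia. rewrite repeat_app, <- !app_assoc. reflexivity.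
Qed.

Lemma PD_PU j : reach_in M0 (T j) (PD j 0) -> reach_in M0 (T j + 4 ^ j + 1) (PU j 0).
Proof.
  intros H. replace (T j + 4 ^ j + 1) with (S (T j + 4 ^ j)) by lia.
  eapply reach_S; [apply chainPD; auto|].
  apply (mk_step [3;2] [4;2;2] (repeat 1 (S j) ++ repeat 0 (2 * 4 ^ j)) (repeat 2 j)).
  - simpl; tauto.
  - unfold PD. rewrite Nat.sub_diag, <- !app_assoc. reflexivity.
  - unfold PU. rewrite Nat.sub_0_r, <- !app_assoc. reflexivity.
Qed.

Lemma chainPU j : reach_in M0 (T j) (PD j 0) -> forall i, i <= 2 * 4 ^ j ->
  reach_in M0 (T j + 4 ^ j + 1 + i) (PU j i).
Proof.
  intros H0; induction i; intros Hi; [rewrite Nat.add_0_r; apply PD_PU; auto|].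
  replace (T j + 4 ^ j + 1 + S i) with (S (T j + 4 ^ j + 1 + i)) by lia. eapply reach_S; [apply IHi; lia|].
  apply (mk_step [0;4] [4;0;0] (repeat 1 (S j) ++ repeat 0 (2 * 4 ^ j - S i)) (repeat 0 (2 * i) ++ repeat 2 (S (S j)))).
  - simpl; tauto.
  - unfold PU. replace (2 * 4 ^ j - i) with (2 * 4 ^ j - S i + 1) by lia. rewrite repeat_app, <- !app_assoc. reflexivity.
  - unfold PU. replace (2 * S i) with (S (S (2 * i))) by lia. rewrite <- !app_assoc. reflexivity.
Qed.

Lemma TS j : T (S j) = T j + 3 * 4 ^ j + 2.
Proof. reflexivity. Qed.

Lemma rep11 j : repeat 1 (S (S j)) = repeat 1 j ++ [1;1].
Proof. replace (S (S j)) with (j+2) by lia; apply repeat_app. Qed.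

Lemma reach_PD0 j : reach_in M0 (T j) (PD j 0).
Proof.
  induction j; [reflexivity|].
  rewrite TS. replace (T j + 3 * 4 ^ j + 2) with (S (T j + 4 ^ j + 1 + 2 * 4 ^ j)) by lia.
  eapply reach_S; [apply chainPU; auto|].
  apply (mk_step [1;4] [1;1;3] (repeat 1 j) (repeat 0 (2 * (2 * 4 ^ j)) ++ repeat 2 (S (S j)))).
  - simpl; tauto.
  - unfold PU. rewrite Nat.sub_diag. simpl repeat at 2. rewrite repeat_S_r, <- !app_assoc. reflexivity.
  - unfold PD. replace (4 ^ S j - 0) with (2 * (2 * 4 ^ j)) by (simpl; lia).
    rewrite rep11, <- !app_assoc. reflexivity.
Qed.

Lemma reach_B j : forall s, reach_in M0 (T (S j) + s) (B j s).
Proof.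
  induction s.
  - rewrite Nat.add_0_r. rewrite TS. replace (T j + 3 * 4 ^ j + 2) with (S (T j + 4 ^ j + 1 + 2 * 4 ^ j)) by lia.
    eapply reach_S; [apply chainPU; auto; apply reach_PD0|].
    apply (mk_step [1;4] [1;1;5] (repeat 1 j) (repeat 0 (2 * (2 * 4 ^ j)) ++ repeat 2 (S (S j)))).
    + simpl; tauto.
    + unfold PU. rewrite Nat.sub_diag. simpl repeat at 2. rewrite repeat_S_r, <- !app_assoc. reflexivity.
    + unfold B. replace (4 * 4 ^ j) with (2 * (2 * 4 ^ j)) by lia.
      rewrite rep11, <- !app_assoc. reflexivity.
  - replace (T (S j) + S s) with (S (T (S j) + s)) by lia. eapply reach_S; [apply IHs|].
    apply (mk_step [5] [5;6] (repeat 1 (S (S j))) (repeat 6 s ++ repeat 0 (4 * 4 ^ j) ++ repeat 2 (S (S j)))).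
    + simpl; tauto.
    + reflexivity.
    + reflexivity.
Qed.

Lemma reach_inv0 n v : reach_in M0 n v -> Inv0 n v.
Proof.
  revert v; induction n; intros v H; simpl in H.
  - left. exists 0, 0. subst v. split; [simpl; lia|split; reflexivity].
  - destruct H as [u [Hu Hs]]. eapply step_inv0; eauto.
Qed.

Lemma graded_M0 : graded M0.
Proof. intros l r H; simpl in H; repeat destruct H as [H|H]; try inversion H; subst; reflexivity. Qed.

Lemma four_pow j : 4 ^ j = 2 ^ (2 * j).
Proof. rewrite Nat.pow_mul_r. reflexivity. Qed.

Lemma T_lower j : 4 ^ j <= T j + 1.
Proof. induction j; [simpl; lia|]. rewrite TS, Nat.pow_succ_r'. lia. Qed.

Lemma T_upper j : T j <= 2 * 4 ^ j.
Proof.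
  induction j; [simpl; lia|]. rewrite TS, Nat.pow_succ_r'.
  assert (4 ^ j <> 0) by (apply Nat.pow_nonzero; lia). lia.
Qed.

Definition U0 n := flat_map (fun j => [PD j (n - T j); PU j (n - T j - 4 ^ j - 1); B j (n - T (S j))])
  (seq 0 (Nat.log2 n + 2)).

Lemma j_bound j n : T j <= n -> j < Nat.log2 n + 2.
Proof.
  intros H. pose proof (T_lower j).
  assert (2 ^ j <= S n). { rewrite four_pow in H0. assert (2 ^ j <= 2 ^ (2 * j)) by (apply Nat.pow_le_mono_r; lia). lia. }
  apply Nat.log2_le_pow2 in H1; [|lia]. pose proof (Nat.log2_succ_le n). lia.
Qed.

Lemma U0_spec n v : reach_in M0 n v -> In v (U0 n).
Proof.
  intros H. apply reach_inv0 in H. unfold U0. apply in_flat_map.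
  destruct H as [[j [i [Hi [Hn HP]]]] | [[j [i [Hi [Hn HP]]]] | [j [s [Hn HP]]]]]; subst v; exists j;
    (split; [apply in_seq; split; [lia|]; apply j_bound|]).
  - lia.
  - left. f_equal. lia.
  - lia.
  - right; left. f_equal. lia.
  - rewrite TS in Hn. lia.
  - right; right; left. f_equal. lia.
Qed.

Lemma U0_len n : length (U0 n) <= 3 * (Nat.log2 n + 2).
Proof.
  unfold U0. eapply Nat.le_trans; [apply (flat_map_len_le _ 3)|].
  - intros; reflexivity.
  - rewrite length_seq. lia.
Qed.

Definition K0 n := map (fun j => B j (n - T (S j))) (seq 0 (Nat.log2 n / 2 - 1)).

Lemma cnt_rep a b n : count_occ Nat.eq_dec (repeat a n) b = if Nat.eqb a b then n else 0.
Proof.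
  induction n; simpl; [destruct (Nat.eqb a b); auto|].
  destruct (Nat.eq_dec a b); subst; rewrite IHn; [rewrite Nat.eqb_refl; auto|].
  apply Nat.eqb_neq in n0. rewrite n0. auto.
Qed.

Lemma cnt2_B j s : count_occ Nat.eq_dec (B j s) 2 = S (S j).
Proof.
  unfold B. rewrite !count_occ_app. simpl count_occ at 2. rewrite !count_occ_app, !cnt_rep. simpl. rewrite cnt_rep. simpl. lia.
Qed.

Lemma K0_nodup n : NoDup (K0 n).
Proof.
  unfold K0. apply NoDup_map_NoDup_ForallPairs; [|apply seq_NoDup].
  intros a b _ _ H. apply (f_equal (fun w => count_occ Nat.eq_dec w 2)) in H.
  rewrite !cnt2_B in H. lia.
Qed.

Lemma K0_len n : length (K0 n) = Nat.log2 n / 2 - 1.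
Proof. unfold K0. rewrite length_map, length_seq. reflexivity. Qed.

Lemma K0_spec n v : In v (K0 n) -> reach_in M0 n v.
Proof.
  unfold K0. intros H. apply in_map_iff in H as [j [<- Hj]]. apply in_seq in Hj.
  assert (T (S j) <= n).
  { pose proof (T_upper (S j)). rewrite four_pow in H.
    assert (0 < n). { destruct n; [simpl in Hj; lia|lia]. }
    pose proof (Nat.log2_spec n H0) as [H1 _].
    assert (2 * (Nat.log2 n / 2) <= Nat.log2 n) by (apply Nat.Div0.mul_div_le).
    assert (2 ^ (S (2 * S j)) <= 2 ^ Nat.log2 n) by (apply Nat.pow_le_mono_r; lia).
    rewrite Nat.pow_succ_r' in H3. lia. }
  replace n with (T (S j) + (n - T (S j))) at 1 by lia. apply reach_B.
Qed.

Lemma wf_M0 : mw_wf M0.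
Proof.
  split.
  - intros a Ha. simpl in Ha. simpl. lia.
  - intros l r H. simpl in H. repeat destruct H as [H|H]; try inversion H; subst;
      split; intros a Ha; simpl in *; lia.
Qed.
Open Scope R_scope.
Open Scope nat_scope.

Fixpoint rulesd (d : nat) : list (word * word) :=
  match d with O => base_rules | S d' => ([7 + 2 * d'], [7 + 2 * d'; 8 + 2 * d']) :: rulesd d' end.
Fixpoint initd (d : nat) : word :=
  match d with O => PD 0 0 | S d' => (7 + 2 * d') :: initd d' end.
Definition Md d := MkMultiway (7 + 2 * d) (rulesd d) (initd d).

Lemma wf_Md d : mw_wf (Md d).
Proof.
  induction d.
  - apply wf_M0.
  - destruct IHd as [Hi Hr]. split.
    + intros a Ha. simpl in Ha. destruct Ha as [<-|Ha]; [simpl; lia|]. apply Hi in Ha. simpl in *. lia.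
    + intros l r H. simpl in H. destruct H as [H|H].
      * inversion H; subst. split; intros a Ha; simpl in *; lia.
      * destruct (Hr l r H) as [H1 H2]. split; intros a Ha; [apply H1 in Ha|apply H2 in Ha]; simpl in *; lia.
Qed.

Lemma graded_Md d : graded (Md d).
Proof.
  induction d; [apply graded_M0|]. intros l r H. simpl in H. destruct H as [H|H].
  - inversion H; reflexivity.
  - apply IHd; auto.
Qed.

Lemma lhs_ne d : forall l r, In (l, r) (rulesd d) -> l <> [].
Proof.
  induction d; intros l r H.
  - simpl in H. repeat destruct H as [H|H]; try inversion H; subst; discriminate.
  - simpl in H. destruct H as [H|H]; [inversion H; discriminate|eauto].
Qed.

Lemma reach_letters d n v : reach_in (Md d) n v -> forall a, In a v -> a < 7 + 2 * d.
Proof. intros H a Ha. apply (reach_over _ (wf_Md d) n v H a Ha). Qed.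

Lemma lift_reach d : forall m v, reach_in (Md d) m v -> reach_in (Md (S d)) m ((7 + 2 * d) :: v).
Proof.
  induction m; intros v H; simpl in H.
  - subst v. reflexivity.
  - destruct H as [u [Hu [l [r [x [y [Hin [-> ->]]]]]]]].
    eapply reach_S; [apply IHm; eauto|]. exists l, r, ((7 + 2 * d) :: x), y.
    split; [right; auto|split; reflexivity].
Qed.

Lemma prepend_back d k : forall m v, reach_in (Md d) m v ->
  reach_in (Md (S d)) (m + k) ((7 + 2 * d) :: repeat (8 + 2 * d) k ++ v).
Proof.
  induction k; intros m v H.
  - rewrite Nat.add_0_r. apply lift_reach; auto.
  - replace (m + S k) with (S (m + k)) by lia. eapply reach_S; [apply IHk; eauto|].
    exists [7 + 2 * d], [7 + 2 * d; 8 + 2 * d], [], (repeat (8 + 2 * d) k ++ v).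
    split; [left; reflexivity|split; reflexivity].
Qed.

Lemma prepend_fwd d : forall n w, reach_in (Md (S d)) n w ->
  exists k v, k <= n /\ reach_in (Md d) (n - k) v /\ w = (7 + 2 * d) :: repeat (8 + 2 * d) k ++ v.
Proof.
  induction n; intros w H; simpl in H.
  - exists 0, (initd d). subst w. repeat split; auto.
  - destruct H as [u [Hu [l [r [x [y [Hin [Hv ->]]]]]]]].
    destruct (IHn u Hu) as [k [v [Hk [Hr ->]]]].
    pose proof (reach_letters _ _ _ Hr) as Hlet.
    simpl in Hin. destruct Hin as [E|Hin].
    + inversion E; subst l r. symmetry in Hv.
      change ((7 + 2 * d) :: repeat (8 + 2 * d) k ++ v) with ([] ++ (7 + 2 * d) :: (repeat (8 + 2 * d) k ++ v)) in Hv.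
      replace (x ++ [7 + 2 * d] ++ y) with (x ++ (7 + 2 * d) :: y) in Hv by reflexivity.
      apply marker_split in Hv; [|simpl; tauto|].
      * destruct Hv as [-> ->]. exists (S k), v. split; [lia|split; [replace (S n - S k) with (n - k) by lia; auto|reflexivity]].
      * intros Hin. apply in_app_or in Hin as [Hin|Hin]; [apply repeat_spec in Hin; lia|apply Hlet in Hin; lia].
    + destruct l as [|c l'] eqn:El; [exfalso; eapply lhs_ne; eauto|].
      symmetry in Hv. change ((7 + 2 * d) :: repeat (8 + 2 * d) k ++ v) with (((7 + 2 * d) :: repeat (8 + 2 * d) k) ++ v) in Hv.
      assert (Hc : c < 7 + 2 * d).
      { destruct (wf_Md d) as [_ Hr']. destruct (Hr' _ _ Hin) as [Hl _]. apply Hl. simpl; auto. }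
      apply prefix_split in Hv.
      * destruct Hv as [x' [-> Hv']]. exists k, (x' ++ r ++ y). split; [lia|split].
        -- replace (S n - k) with (S (n - k)) by lia. eapply reach_S; eauto. exists (c :: l'), r, x', y. auto.
        -- rewrite <- app_assoc. reflexivity.
      * intros [H|H]; [lia|]. apply repeat_spec in H; lia.
Qed.

Fixpoint Ud (d n : nat) : list word :=
  match d with
  | O => U0 n
  | S d' => flat_map (fun k => map (fun v => (7 + 2 * d') :: repeat (8 + 2 * d') k ++ v) (Ud d' (n - k))) (seq 0 (S n))
  end.

Fixpoint Kd (d n : nat) : list word :=
  match d with
  | O => K0 n
  | S d' => flat_map (fun k => map (fun v => (7 + 2 * d') :: repeat (8 + 2 * d') k ++ v) (Kd d' (n - k))) (seq 0 (S (n / 2)))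
  end.

Lemma Ud_spec d : forall n v, reach_in (Md d) n v -> In v (Ud d n).
Proof.
  induction d; intros n v H.
  - apply U0_spec; auto.
  - apply prepend_fwd in H as [k [w [Hk [Hr ->]]]]. cbn [Ud]. apply (proj2 (in_flat_map _ _ _)). exists k.
    split; [apply in_seq; lia|]. apply in_map_iff. exists w; split; auto.
Qed.

Lemma Kd_spec d : forall n v, In v (Kd d n) -> reach_in (Md d) n v.
Proof.
  induction d; intros n v H.
  - apply K0_spec; auto.
  - cbn [Kd] in H. apply in_flat_map in H as [k [Hk H]]. apply in_seq in Hk.
    apply in_map_iff in H as [w [<- Hw]]. apply IHd in Hw.
    assert (n / 2 <= n) by (apply Nat.Div0.div_le_upper_bound; lia).
    replace n with ((n - k) + k) at 1 by lia. apply prepend_back; auto.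
Qed.

Lemma cnt_z d n v k : reach_in (Md d) n v ->
  count_occ Nat.eq_dec ((7 + 2 * d) :: repeat (8 + 2 * d) k ++ v) (8 + 2 * d) = k.
Proof.
  intros H. rewrite count_occ_cons_neq by lia.
  rewrite count_occ_app, cnt_rep, Nat.eqb_refl.
  assert (count_occ Nat.eq_dec v (8 + 2 * d) = 0).
  { apply count_occ_not_In. intros Hin. apply (reach_letters _ _ _ H) in Hin. lia. }
  lia.
Qed.

Lemma Kd_nodup d : forall n, NoDup (Kd d n).
Proof.
  induction d; intros n.
  - apply K0_nodup.
  - cbn [Kd]. apply NoDup_flat_map; [apply seq_NoDup| |].
    + intros k _. apply NoDup_map_NoDup_ForallPairs; auto.
      intros a b _ _ Hab. injection Hab as Hab. apply app_inv_head in Hab. auto.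
    + intros k k' b _ _ H1 H2.
      apply in_map_iff in H1 as [v [<- Hv]]. apply in_map_iff in H2 as [v' [E Hv']].
      apply Kd_spec in Hv, Hv'.
      apply (f_equal (fun w => count_occ Nat.eq_dec w (8 + 2 * d))) in E.
      rewrite (cnt_z _ _ _ _ Hv), (cnt_z _ _ _ _ Hv') in E. auto.
Qed.

Definition Ups d n := (n + 1) ^ d * (3 * (Nat.log2 n + 2)).
Definition Lam d n := (n / 2 ^ d) ^ d * (Nat.log2 (n / 2 ^ d) / 2 - 1).

Lemma Ups_mono d n m : n <= m -> Ups d n <= Ups d m.
Proof.
  intros H. unfold Ups. apply Nat.mul_le_mono; [apply Nat.pow_le_mono_l; lia|].
  pose proof (Nat.log2_le_mono _ _ H). lia.
Qed.

Lemma Lam_mono d n m : n <= m -> Lam d n <= Lam d m.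
Proof.
  intros H. unfold Lam. assert (n / 2 ^ d <= m / 2 ^ d) by (apply Nat.Div0.div_le_mono; auto).
  apply Nat.mul_le_mono; [apply Nat.pow_le_mono_l; lia|].
  pose proof (Nat.log2_le_mono _ _ H0). pose proof (Nat.Div0.div_le_mono _ _ 2 H1). lia.
Qed.

Lemma Ud_len d : forall n, length (Ud d n) <= Ups d n.
Proof.
  induction d; intros n.
  - unfold Ups. cbn [Ud]. rewrite Nat.pow_0_r, Nat.mul_1_l. apply U0_len.
  - cbn [Ud]. eapply Nat.le_trans; [apply (flat_map_len_le _ (Ups d n))|].
    + intros k Hk. apply in_seq in Hk. rewrite length_map. eapply Nat.le_trans; [apply IHd|apply Ups_mono; lia].
    + rewrite length_seq. unfold Ups. simpl. lia.
Qed.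

Lemma Kd_len d : forall n, Lam d n <= length (Kd d n).
Proof.
  induction d; intros n.
  - unfold Lam. cbn [Kd]. rewrite Nat.pow_0_r, Nat.pow_0_r, Nat.mul_1_l, K0_len, Nat.div_1_r. lia.
  - cbn [Kd]. eapply Nat.le_trans; [|apply (flat_map_len_ge _ (Lam d (n / 2)))].
    + rewrite length_seq. unfold Lam.
      assert (E: n / 2 ^ S d = n / 2 / 2 ^ d) by (rewrite Nat.pow_succ_r', Nat.Div0.div_div; reflexivity).
      rewrite E.
      set (q := n / 2 / 2 ^ d).
      assert (q <= n / 2) by (apply Nat.Div0.div_le_upper_bound; pose proof (Nat.pow_nonzero 2 d); nia).
      rewrite Nat.pow_succ_r'. set (X := q ^ d * (Nat.log2 q / 2 - 1)).
      replace (q * q ^ d * (Nat.log2 q / 2 - 1)) with (q * X) by (unfold X; lia). nia.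
    + intros k Hk. apply in_seq in Hk. rewrite length_map. eapply Nat.le_trans; [|apply IHd].
      apply Lam_mono. pose proof (Nat.Div0.mul_div_le n 2). lia.
Qed.
Open Scope R_scope.
Open Scope nat_scope.

Lemma growth_bounds d : exists g, is_growth (Md d) g /\
  forall m, Lam d m <= g (S m) <= Ups d m.
Proof.
  exists (gfun (Md d)). split; [apply gfun_growth; [apply wf_Md|apply graded_Md]|].
  intros m. split.
  - eapply Nat.le_trans; [apply Kd_len|]. apply gfun_lower; [apply wf_Md|apply graded_Md|apply Kd_nodup|].
    apply Kd_spec.
  - eapply Nat.le_trans; [|apply Ud_len]. apply gfun_upper; [apply wf_Md|apply graded_Md|].
    apply Ud_spec.
Qed.

Lemma NU d m : 1 <= m -> Ups d m <= 9 * ((m + 1) ^ d * Nat.log2 (m + 1)).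
Proof.
  intros Hm. unfold Ups.
  assert (1 <= Nat.log2 (m + 1)) by (apply Nat.log2_le_pow2; simpl; lia).
  assert (Nat.log2 m <= Nat.log2 (m + 1)) by (apply Nat.log2_le_mono; lia).
  assert (3 * (Nat.log2 m + 2) <= 9 * Nat.log2 (m + 1)) by lia.
  nia.
Qed.

Lemma NL d m : 2 ^ d * 2 ^ (d + 6) <= m ->
  (m + 1) ^ d * Nat.log2 (m + 1) <= 8 * 2 ^ ((d + 1) * d) * Lam d m.
Proof.
  intros Hm. unfold Lam. set (q := m / 2 ^ d).
  assert (Hp : 2 ^ d <> 0) by (apply Nat.pow_nonzero; lia).
  assert (Hq : 2 ^ (d + 6) <= q) by (apply Nat.div_le_lower_bound; auto; lia).
  assert (Hq1 : 1 <= q). { assert (2 ^ (d+6) <> 0) by (apply Nat.pow_nonzero; lia). lia. }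
  assert (HL : d + 6 <= Nat.log2 q) by (apply Nat.log2_le_pow2; lia).
  assert (Hdm : m < (q + 1) * 2 ^ d).
  { pose proof (Nat.div_mod m (2 ^ d) Hp). pose proof (Nat.mod_upper_bound m (2 ^ d) Hp). fold q in H. nia. }
  assert (Hm1 : m + 1 <= q * 2 ^ (d + 1)) by (rewrite Nat.pow_add_r; simpl; nia).
  assert (Hpow : (m + 1) ^ d <= 2 ^ ((d + 1) * d) * q ^ d).
  { eapply Nat.le_trans; [apply Nat.pow_le_mono_l; exact Hm1|].
    rewrite Nat.pow_mul_l, Nat.pow_mul_r. lia. }
  assert (Hlog : Nat.log2 (m + 1) <= Nat.log2 q + (d + 1)).
  { eapply Nat.le_trans; [apply Nat.log2_le_mono; exact Hm1|]. rewrite Nat.log2_mul_pow2; lia. }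
  set (L := Nat.log2 q) in *.
  assert (HL2 : Nat.log2 (m + 1) <= 8 * (L / 2 - 1)).
  { pose proof (Nat.div_mod L 2 ltac:(lia)). pose proof (Nat.mod_upper_bound L 2 ltac:(lia)). lia. }
  set (A := 2 ^ ((d + 1) * d)) in *. set (X := L / 2 - 1) in *.
  eapply Nat.le_trans; [apply Nat.mul_le_mono; [exact Hpow|exact HL2]|]. nia.
Qed.
Open Scope R_scope.

Lemma ln_le x y : 0 < x -> x <= y -> ln x <= ln y.
Proof. intros Hx [H|H]; [left; apply ln_increasing; auto|subst; lra]. Qed.

Lemma ln_nonneg x : 1 <= x -> 0 <= ln x.
Proof. intros H. rewrite <- ln_1. apply ln_le; lra. Qed.

Lemma ln2_pos : 0 < ln 2.
Proof. rewrite <- ln_1. apply ln_increasing; lra. Qed.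

Definition F (d : nat) (x : R) := x ^ d * ln x.

Lemma F_nonneg d x : 1 <= x -> 0 <= F d x.
Proof. intros H. unfold F. apply Rmult_le_pos; [apply pow_le; lra|apply ln_nonneg; auto]. Qed.

Lemma F_mono d x y : 1 <= x -> x <= y -> F d x <= F d y.
Proof.
  intros Hx Hy. unfold F. apply Rmult_le_compat.
  - apply pow_le; lra.
  - apply ln_nonneg; auto.
  - apply pow_incr; lra.
  - apply ln_le; lra.
Qed.

Lemma F_step d y : 2 <= y -> F d (y + 1) <= 2 ^ (S d) * F d y.
Proof.
  intros Hy. unfold F.
  assert (H1 : (y + 1) ^ d <= 2 ^ d * y ^ d).
  { rewrite <- Rpow_mult_distr. apply pow_incr; lra. }
  assert (H2 : ln (y + 1) <= 2 * ln y).
  { replace (2 * ln y) with (ln (y * y)) by (rewrite ln_mult; lra).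
    apply ln_le; nra. }
  assert (0 <= (y + 1) ^ d) by (apply pow_le; lra).
  assert (0 <= ln (y + 1)) by (apply ln_nonneg; lra).
  assert (0 <= y ^ d) by (apply pow_le; lra).
  assert (0 <= ln y) by (apply ln_nonneg; lra).
  assert (0 <= 2 ^ d) by (apply pow_le; lra).
  simpl pow at 2.
  apply Rle_trans with ((2 ^ d * y ^ d) * (2 * ln y)); [apply Rmult_le_compat; auto|]. lra.
Qed.

Lemma log2_ln_lower (N : nat) : (1 <= N)%nat -> INR (Nat.log2 N) * ln 2 <= ln (INR N).
Proof.
  intros HN. destruct (Nat.log2_spec N ltac:(lia)) as [H _].
  apply le_INR in H. rewrite pow_INR in H. simpl INR in H.
  rewrite <- ln_pow by lra. apply ln_le; [apply pow_lt; lra|].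
  replace (1 + 1) with 2 in H by lra. auto.
Qed.

Lemma log2_ln_upper (N : nat) : (2 <= N)%nat -> ln (INR N) <= 2 * ln 2 * INR (Nat.log2 N).
Proof.
  intros HN. destruct (Nat.log2_spec N ltac:(lia)) as [_ H].
  assert (HL : (1 <= Nat.log2 N)%nat) by (apply Nat.log2_le_pow2; simpl; lia).
  apply lt_INR in H. rewrite pow_INR in H. simpl INR in H. replace (1 + 1) with 2 in H by lra.
  apply le_INR in HL. simpl INR in HL.
  assert (ln (INR N) <= ln (2 ^ S (Nat.log2 N))) by (apply ln_le; [apply lt_0_INR; lia|lra]).
  rewrite ln_pow in H0 by lra. rewrite S_INR in H0. pose proof ln2_pos. nra.
Qed.
Open Scope R_scope.

Lemma floor_facts x : 0 <= x ->
  let n := Z.to_nat (Int_part x) in INR n <= x < INR n + 1.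
Proof.
  intros Hx n. destruct (base_Int_part x) as [H1 H2].
  assert (Hz : (0 <= Int_part x)%Z).
  { destruct (Z_lt_le_dec (Int_part x) 0) as [l|l]; auto.
    assert (IZR (Int_part x) <= -1) by (apply IZR_le; lia). lra. }
  unfold n. rewrite INR_IZR_INZ, Z2Nat.id by auto. lra.
Qed.

Lemma hz_pos h n : (1 <= n)%nat -> hz h n = INR (h n).
Proof. intros H. destruct n; [lia|reflexivity]. Qed.

Lemma hz_nonneg h n : 0 <= hz h n.
Proof. destruct n; simpl; [lra|apply pos_INR]. Qed.

Lemma polychain_nonneg h x : 0 <= x -> 0 <= polychain h x.
Proof.
  intros Hx. pose proof (floor_facts x Hx) as Hf. unfold polychain. simpl in Hf. cbv zeta.
  set (n := Z.to_nat (Int_part x)) in *.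
  pose proof (hz_nonneg h n). pose proof (hz_nonneg h (S n)).
  set (t := x - INR n). assert (0 <= t < 1) by (unfold t; lra).
  assert (0 <= (1-t)*hz h n) by (apply Rmult_le_pos; lra).
  assert (0 <= t * hz h (S n)) by (apply Rmult_le_pos; lra). fold t. nra.
Qed.

Lemma polychain_theta (d : nat) (g : nat -> nat) (c1 c2 : R) (N0 : nat) :
  0 < c1 -> 0 < c2 -> (2 <= N0)%nat ->
  (forall N, (N0 <= N)%nat -> c1 * F d (INR N) <= INR (g N) <= c2 * F d (INR N)) ->
  BigTheta (polychain g) (F d).
Proof.
  intros Hc1 Hc2 HN0 Hb. set (K := 2 ^ S d).
  assert (HK : 1 <= K) by (unfold K; apply pow_R1_Rle; lra).
  exists (c1 / K), (c2 * K), (INR N0 + 1). split; [apply Rdiv_lt_0_compat; lra|split; [nra|]].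
  intros x Hx Hx0. pose proof (floor_facts x Hx) as Hf. unfold polychain. simpl in Hf. cbv zeta.
  set (n := Z.to_nat (Int_part x)) in *.
  assert (HnN : (N0 <= n)%nat).
  { destruct (le_lt_dec N0 n); auto. apply lt_INR in l. lra. }
  assert (Hn2 : 2 <= INR n) by (apply le_INR in HnN; apply le_INR in HN0; simpl in HN0; lra).
  rewrite (hz_pos g n) by lia. rewrite (hz_pos g (S n)) by lia.
  destruct (Hb n HnN) as [Ha1 Ha2]. destruct (Hb (S n) ltac:(lia)) as [Hb1 Hb2].
  rewrite S_INR in Hb1, Hb2.
  set (a := INR (g n)) in *. set (b := INR (g (S n))) in *.
  set (t := x - INR n). assert (Ht : 0 <= t < 1) by (unfold t; lra).
  replace (a + t * (b - a)) with ((1 - t) * a + t * b) by ring.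
  pose proof (F_mono d (INR n) (INR n + 1) ltac:(lra) ltac:(lra)) as M1.
  pose proof (F_mono d (INR n) x ltac:(lra) ltac:(lra)) as M2.
  pose proof (F_mono d x (INR n + 1) ltac:(lra) ltac:(lra)) as M3.
  pose proof (F_step d (INR n) Hn2) as S1. fold K in S1.
  pose proof (F_nonneg d (INR n) ltac:(lra)).
  set (Fn := F d (INR n)) in *. set (Fn1 := F d (INR n + 1)) in *. set (Fx := F d x) in *.
  split.
  - assert ((1 - t) * (c1 * Fn) <= (1 - t) * a) by (apply Rmult_le_compat_l; lra).
    assert (t * (c1 * Fn) <= t * b) by (apply Rmult_le_compat_l; nra).
    assert (c1 * Fn <= (1 - t) * a + t * b) by lra.
    assert (Fx <= K * Fn) by lra.
    unfold Rdiv. apply Rle_trans with (c1 * Fn); auto.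
    apply Rmult_le_reg_l with K; [lra|].
    replace (K * (c1 * / K * Fx)) with (c1 * Fx) by (field; lra). nra.
  - assert ((1 - t) * a <= (1 - t) * (c2 * Fn1)) by (apply Rmult_le_compat_l; nra).
    assert (t * b <= t * (c2 * Fn1)) by (apply Rmult_le_compat_l; nra).
    assert (c2 * Fn1 <= c2 * (K * Fn)) by (apply Rmult_le_compat_l; lra).
    assert (c2 * (K * Fn) <= c2 * (K * Fx)) by (apply Rmult_le_compat_l; [lra|]; apply Rmult_le_compat_l; lra).
    lra.
Qed.
Open Scope R_scope.

Lemma growth_theta d : exists g, is_growth (Md d) g /\ BigTheta (polychain g) (F d).
Proof.
  destruct (growth_bounds d) as [g [Hg Hb]]. exists g. split; auto.
  set (A := INR (2 ^ ((d + 1) * d))).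
  assert (HA : 1 <= A) by (unfold A; apply (le_INR 1); pose proof (Nat.pow_nonzero 2 ((d+1)*d)); lia).
  pose proof ln2_pos as Hl2.
  apply (polychain_theta d g (/ (16 * A * ln 2)) (9 / ln 2) (2 ^ d * 2 ^ (d + 6) + 1)).
  - apply Rinv_0_lt_compat. nra.
  - apply Rdiv_lt_0_compat; lra.
  - pose proof (Nat.pow_nonzero 2 d). pose proof (Nat.pow_nonzero 2 (d+6)). nia.
  - intros N HN. destruct N as [|m]; [lia|].
    destruct (Hb m) as [Hlo Hhi].
    assert (Hm : (2 ^ d * 2 ^ (d + 6) <= m)%nat) by lia.
    assert (Hm1 : (1 <= m)%nat) by (pose proof (Nat.pow_nonzero 2 d); pose proof (Nat.pow_nonzero 2 (d+6)); nia).
    pose proof (NU d m Hm1) as U. pose proof (NL d m Hm) as L.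
    replace (m + 1)%nat with (S m) in U, L by lia.
    apply le_INR in Hlo, Hhi, U, L.
    rewrite !mult_INR, pow_INR in U, L. fold A in L.
    pose proof (log2_ln_lower (S m) ltac:(lia)) as LL.
    pose proof (log2_ln_upper (S m) ltac:(lia)) as LU.
    set (X := INR (S m)) in *. set (lg := INR (Nat.log2 (S m))) in *.
    assert (HX : 0 <= X ^ d) by (apply pow_le; unfold X; apply pos_INR).
    assert (Hlg : 0 <= lg) by apply pos_INR.
    unfold F. split.
    +
      assert (H1 : X ^ d * ln X <= X ^ d * (2 * ln 2 * lg)) by (apply Rmult_le_compat_l; auto).
      rewrite mult_INR in L. fold A in L. simpl INR in L.
      assert (H3: X ^ d * ln X <= (16 * A * ln 2) * INR (g (S m))).
      { assert (E: X ^ d * (2 * ln 2 * lg) = 2 * ln 2 * (X ^ d * lg)) by ring.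
        assert (2 * ln 2 * (X ^ d * lg) <= 2 * ln 2 * (8 * A * INR (Lam d m))) by (apply Rmult_le_compat_l; lra).
        assert (2 * ln 2 * (8 * A * INR (Lam d m)) <= 2 * ln 2 * (8 * A * INR (g (S m)))).
        { apply Rmult_le_compat_l; [lra|]. apply Rmult_le_compat_l; lra. }
        lra. }
      apply Rmult_le_reg_l with (16 * A * ln 2); [nra|].
      rewrite <- Rmult_assoc, Rinv_r by nra. lra.
    +
      assert (H1 : lg <= ln X / ln 2) by (apply Rmult_le_reg_r with (ln 2); auto; unfold Rdiv; rewrite Rmult_assoc, Rinv_l; lra).
      assert (H2 : X ^ d * lg <= X ^ d * (ln X / ln 2)) by (apply Rmult_le_compat_l; auto).
      simpl INR in U.
      unfold Rdiv in *. nra.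
Qed.
Open Scope R_scope.

Lemma div_nonneg a b : 0 <= a -> 0 < b -> 0 <= a / b.
Proof. intros. unfold Rdiv. apply Rmult_le_pos; auto. left; apply Rinv_0_lt_compat; auto. Qed.

Lemma peval_split p : (forall x, peval p x = 0) \/
  exists q a, a <> 0 /\ forall x, peval p x = peval q x + a * x ^ length q.
Proof.
  induction p as [|c p IH].
  - left; intros; reflexivity.
  - destruct IH as [H|[q [a [Ha H]]]].
    + destruct (Req_dec c 0) as [->|Hc].
      * left; intros x; simpl; rewrite H; ring.
      * right; exists [], c; split; auto; intros x; simpl; rewrite H; ring.
    + right; exists (c :: q), a; split; auto; intros x; simpl; rewrite H; ring.
Qed.

Lemma peval_bound q : exists A, 0 <= A /\ forall x, 1 <= x -> Rabs (peval q x) * x <= A * x ^ length q.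
Proof.
  induction q as [|c q IH].
  - exists 0; split; [lra|]. intros x Hx; simpl. rewrite Rabs_R0. lra.
  - destruct IH as [A [HA H]]. exists (Rabs c + A). split; [pose proof (Rabs_pos c); lra|].
    intros x Hx. simpl peval. simpl length. specialize (H x Hx).
    assert (Hp : 1 <= x ^ length q) by (apply pow_R1_Rle; lra).
    pose proof (Rabs_triang c (x * peval q x)) as T. rewrite Rabs_mult, (Rabs_right x) in T by lra.
    pose proof (Rabs_pos c). pose proof (Rabs_pos (peval q x)).
    simpl pow.
    assert (Rabs (c + x * peval q x) * x <= (Rabs c + x * Rabs (peval q x)) * x) by (apply Rmult_le_compat_r; lra).
    assert (Rabs c * x <= Rabs c * (x * x ^ length q)) by (apply Rmult_le_compat_l; nra).
    assert (x * (Rabs (peval q x) * x) <= x * (A * x ^ length q)) by (apply Rmult_le_compat_l; lra).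
    nra.
Qed.

Theorem mainTheorem10 : forall p : list R,
  multiway_approximable (peval p) ->
  exists f : R -> R, multiway_approximable f /\
    BigTheta f (fun x => ln x * peval p x).
Proof.
  intros p Happ. pose proof Happ as [Hnn _].
  destruct (peval_split p) as [H0|[q [a [Ha Hp]]]].
  - exists (peval p). split; auto. exists 1, 1, 0. split; [lra|split; [lra|]].
    intros x _ _. rewrite H0. lra.
  - destruct (peval_bound q) as [A [HA HB]].
    set (d := length q) in *.
    assert (Hapos : 0 < a).
    { destruct (Rtotal_order a 0) as [Hneg|[Hz|Hpos]]; [|contradiction|auto].
      exfalso. set (x := 1 + A / (- a)).
      assert (Hx : 1 <= x) by (unfold x; assert (0 <= A / - a) by (apply div_nonneg; lra); lra).
      specialize (Hnn x ltac:(lra)). rewrite Hp in Hnn.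
      specialize (HB x Hx). pose proof (Rle_abs (peval q x)).
      assert (Hxd : 0 < x ^ d) by (apply pow_lt; lra).
      assert (peval q x * x <= A * x ^ d) by nra.
      assert (E : A = (x - 1) * (- a)) by (unfold x; field; lra).
      nra. }
    destruct (growth_theta d) as [g [Hg [e1 [e2 [x1 [He1 [He2 Hth]]]]]]].
    exists (polychain g). split.
    + split; [apply polychain_nonneg|].
      exists (Md d), g. split; [apply wf_Md|split; auto].
      exists 1, 1, 0. split; [lra|split; [lra|]]. intros; lra.
    + exists (e1 * (2 / (3 * a))), (e2 * (2 / a)), (Rmax x1 (1 + 2 * A / a)).
      split; [apply Rmult_lt_0_compat; auto; apply Rdiv_lt_0_compat; lra|].
      split; [apply Rmult_lt_0_compat; auto; apply Rdiv_lt_0_compat; lra|].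
      intros x Hx Hx0. pose proof (Rmax_l x1 (1 + 2 * A / a)). pose proof (Rmax_r x1 (1 + 2 * A / a)).
      assert (H2A : 0 <= 2 * A / a) by (apply div_nonneg; lra).
      assert (Hx1 : 1 <= x) by lra.
      destruct (Hth x Hx ltac:(lra)) as [L U].
      specialize (HB x Hx1). rewrite Hp.
      assert (Hxd : 0 < x ^ d) by (apply pow_lt; lra).
      assert (Hln : 0 <= ln x) by (apply ln_nonneg; auto).
      assert (Hq : Rabs (peval q x) <= a / 2 * x ^ d).
      { assert (A * x ^ d <= a / 2 * x ^ d * x).
        { assert (2 * A / a <= x) by lra.
          assert (A <= a / 2 * x).
          { apply Rmult_le_reg_l with (2 / a); [apply Rdiv_lt_0_compat; lra|].
            replace (2 / a * (a / 2 * x)) with x by (field; lra).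
            replace (2 / a * A) with (2 * A / a) by (field; lra). lra. }
          nra. }
        apply Rmult_le_reg_r with x; [lra|]. lra. }
      pose proof (Rle_abs (peval q x)). pose proof (Rle_abs (- peval q x)). rewrite Rabs_Ropp in H2.
      unfold F in L, U.
      set (P := peval q x) in *. set (Xd := x ^ d) in *. set (lx := ln x) in *.
      assert (Hp1 : a / 2 * Xd <= P + a * Xd) by lra.
      assert (Hp2 : P + a * Xd <= 3 * a / 2 * Xd) by lra.
      assert (Hl1 : lx * (a / 2 * Xd) <= lx * (P + a * Xd)) by (apply Rmult_le_compat_l; auto).
      assert (Hl2 : lx * (P + a * Xd) <= lx * (3 * a / 2 * Xd)) by (apply Rmult_le_compat_l; auto).
      split.
      * assert (Xd * lx >= 2 / (3 * a) * (lx * (P + a * Xd))).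
        { apply Rle_ge. apply Rmult_le_reg_l with (3 * a / 2); [lra|].
          replace (3 * a / 2 * (2 / (3 * a) * (lx * (P + a * Xd)))) with (lx * (P + a * Xd)) by (field; lra).
          lra. }
        assert (e1 * (2 / (3 * a) * (lx * (P + a * Xd))) <= e1 * (Xd * lx)) by (apply Rmult_le_compat_l; lra).
        rewrite Rmult_assoc. lra.
      * assert (Xd * lx <= 2 / a * (lx * (P + a * Xd))).
        { apply Rmult_le_reg_l with (a / 2); [lra|].
          replace (a / 2 * (2 / a * (lx * (P + a * Xd)))) with (lx * (P + a * Xd)) by (field; lra).
          lra. }
        assert (e2 * (Xd * lx) <= e2 * (2 / a * (lx * (P + a * Xd)))) by (apply Rmult_le_compat_l; lra).
        rewrite Rmult_assoc. lra.
Qed.
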